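(* (1) Co-commensurability is an equivalence relation on pairs $(G,\alpha)$ consisting of a compact group $G$ and an automorphism $\alpha$ of $G$. (2) Two such pairs $(H_1,\alpha_1)$ and $(H_2,\alpha_2)$ are co-commensurable if and only if there is a pair $(L,\gamma)$ (a compact group with automorphism) and surjective homomorphisms $\psi_i:H_i\to L$ with finite kernels satisfying $\gamma\circ\psi_i=\psi_i\circ\alpha_i$ for $i=1,2$.
   Context: Pairs $(G_1,\alpha_1)$ and $(G_2,\alpha_2)$ are co-commensurable if there is a pair $(G,\alpha)$ (compact group with automorphism) and surjective continuous homomorphisms $\varphi_i:G\to G_i$ with finite kernels satisfying $\varphi_i\circ\alpha=\alpha_i\circ\varphi_i$ for $i=1,2$. *)

(* Defs.v *)
From HB Require Import structures.
From mathcomp Require Import all_boot all_order.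
From mathcomp Require Import all_classical all_reals topology.
Set Implicit Arguments. Unset Strict Implicit. Unset Printing Implicit Defensive.
Local Open Scope classical_set_scope.

Record CGroup := {
  cg_carrier :> topologicalType;
  cg_mul : cg_carrier -> cg_carrier -> cg_carrier;
  cg_one : cg_carrier;
  cg_inv : cg_carrier -> cg_carrier;
  cg_mulA : forall x y z, cg_mul x (cg_mul y z) = cg_mul (cg_mul x y) z;
  cg_mul1g : forall x, cg_mul cg_one x = x;
  cg_mulg1 : forall x, cg_mul x cg_one = x;
  cg_mulVg : forall x, cg_mul (cg_inv x) x = cg_one;
  cg_mulgV : forall x, cg_mul x (cg_inv x) = cg_one;
  cg_mul_cont : continuous (fun p : cg_carrier * cg_carrier => cg_mul p.1 p.2);
  cg_inv_cont : continuous cg_inv;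
  cg_compact : compact [set: cg_carrier];
  cg_hausdorff : hausdorff_space cg_carrier
}.

Definition is_hom (G H : CGroup) (f : G -> H) : Prop :=
  forall x y, f (cg_mul x y) = cg_mul (f x) (f y).

Definition is_auto (G : CGroup) (a : G -> G) : Prop :=
  is_hom a /\ continuous a /\
  exists b : G -> G, cancel a b /\ cancel b a /\ continuous b.

Definition fk_quot (G H : CGroup) (f : G -> H) : Prop :=
  is_hom f /\ continuous f /\ (forall y : H, exists x : G, f x = y) /\
  finite_set [set x : G | f x = cg_one H].

Record CGPair := {
  cgp_group :> CGroup;
  cgp_aut : cgp_group -> cgp_group;
  cgp_autP : is_auto cgp_aut
}.

Arguments cgp_aut : clear implicits.

Definition cocommensurable (P1 P2 : CGPair) : Prop :=
  exists (P : CGPair) (phi1 : P -> P1) (phi2 : P -> P2),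
    fk_quot phi1 /\ fk_quot phi2 /\
    (forall x : P, phi1 (cgp_aut P x) = cgp_aut P1 (phi1 x)) /\
    (forall x : P, phi2 (cgp_aut P x) = cgp_aut P2 (phi2 x)).

(* Main.v *)
From HB Require Import structures.
Require Import Defs.
From mathcomp Require Import all_boot all_order.
From mathcomp Require Import all_classical all_reals topology.
Set Implicit Arguments. Unset Strict Implicit. Unset Printing Implicit Defensive.
Local Open Scope classical_set_scope.

Section Cont.
Context {X Y Z : topologicalType}.
Lemma cont_fst : continuous (@fst X Y).
Proof. move=> p; exact: cvg_fst. Qed.
Lemma cont_snd : continuous (@snd X Y).
Proof. move=> p; exact: cvg_snd. Qed.
Lemma cont_pair (f : Z -> X) (g : Z -> Y) : continuous f -> continuous g ->
  continuous (fun z => (f z, g z)).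
Proof. move=> cf cg z; have H := cvg_pair (cf z) (cg z); exact: H. Qed.
Lemma cont_comp (f : X -> Y) (g : Y -> Z) : continuous f -> continuous g ->
  continuous (g \o f).
Proof. move=> cf cg x; apply: continuous_comp; [exact: cf|exact: cg]. Qed.
End Cont.

Section Grp.
Variable G : CGroup.
Implicit Types x y z : G.
Lemma cmulKg x y : cg_mul (cg_inv x) (cg_mul x y) = y.
Proof. by rewrite cg_mulA cg_mulVg cg_mul1g. Qed.
Lemma cmulVKg x y : cg_mul x (cg_mul (cg_inv x) y) = y.
Proof. by rewrite cg_mulA cg_mulgV cg_mul1g. Qed.
Lemma cmulgK x y : cg_mul (cg_mul y x) (cg_inv x) = y.
Proof. by rewrite -cg_mulA cg_mulgV cg_mulg1. Qed.
Lemma cmulgVK x y : cg_mul (cg_mul y (cg_inv x)) x = y.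
Proof. by rewrite -cg_mulA cg_mulVg cg_mulg1. Qed.
Lemma cmulgI x y z : cg_mul x y = cg_mul x z -> y = z.
Proof. by move=> h; rewrite -(cmulKg x y) h cmulKg. Qed.
Lemma cmulIg x y z : cg_mul y x = cg_mul z x -> y = z.
Proof. by move=> h; rewrite -(cmulgK x y) h cmulgK. Qed.
Lemma cinvg1 : cg_inv (cg_one G) = cg_one G.
Proof. by rewrite -{2}(cg_mulVg (cg_one G)) cg_mulg1. Qed.
Lemma cinvMg x y : cg_inv (cg_mul x y) = cg_mul (cg_inv y) (cg_inv x).
Proof.
apply: (@cmulgI (cg_mul x y)); rewrite cg_mulgV -cg_mulA cmulVKg cg_mulgV //.
Qed.
Lemma cinvgK x : cg_inv (cg_inv x) = x.
Proof. by apply: (@cmulgI (cg_inv x)); rewrite cg_mulgV cg_mulVg. Qed.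
Lemma cont_mul2 {Z : topologicalType} (f g : Z -> G) : continuous f -> continuous g ->
  continuous (fun w => cg_mul (f w) (g w)).
Proof.
move=> cf cg; apply: (@cont_comp _ _ _ (fun w => (f w, g w)) (fun p => cg_mul p.1 p.2)).
  exact: cont_pair.
exact: cg_mul_cont.
Qed.
End Grp.

Section Hom.
Variables G H : CGroup.
Variable f : G -> H.
Hypothesis hf : is_hom f.
Lemma hom1 : f (cg_one G) = cg_one H.
Proof.
apply: (@cmulgI _ (f (cg_one G))); rewrite -hf cg_mulg1 cg_mulg1 //.
Qed.
Lemma homV x : f (cg_inv x) = cg_inv (f x).
Proof.
apply: (@cmulgI _ (f x)); rewrite -hf cg_mulgV cg_mulgV hom1 //.
Qed.
End Hom.

Lemma fk_id (G : CGroup) : fk_quot (@id G).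
Proof.
split; first by [].
split; first by move=> x; exact: cvg_id.
split; first by move=> y; exists y.
exact: finite_set1.
Qed.

Lemma surj_section (G H : Type) (f : G -> H) :
  (forall y, exists x, f x = y) -> {s : H -> G | forall y, f (s y) = y}.
Proof.
move=> hs; exists (fun y => projT1 (cid (hs y))) => y.
exact: (projT2 (cid (hs y))).
Qed.

Lemma finite_preim_fk (G H : CGroup) (f : G -> H) (B : set H) :
  fk_quot f -> finite_set B -> finite_set (f @^-1` B).
Proof.
move=> [hf [cf [sf kf]]] fB.
have [s sK] := surj_section sf.
apply: (@sub_finite_set _ _ ((fun p => cg_mul (s p.1) p.2) @` (B `*` [set x : G | f x = cg_one H]))).
  move=> x Bx; exists (f x, cg_mul (cg_inv (s (f x))) x) => /=.
    split => //=; rewrite hf (homV hf) sK cg_mulVg //.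
  exact: cmulVKg.
apply: finite_image; exact: finite_setX.
Qed.

Lemma fk_comp (G H K : CGroup) (f : G -> H) (g : H -> K) :
  fk_quot f -> fk_quot g -> fk_quot (g \o f).
Proof.
move=> hf' hg'; have [hf [cf [sf kf]]] := hf'; have [hg [cg [sg kg]]] := hg'.
split; first by move=> x y /=; rewrite hf hg.
split; first exact: cont_comp.
split; first by move=> z; have [y <-] := sg z; have [x <-] := sf y; exists x.
exact: (@finite_preim_fk _ _ f [set y | g y = cg_one K]).
Qed.

Lemma closed_eqset (X Y : topologicalType) (u v : X -> Y) :
  hausdorff_space Y -> continuous u -> continuous v -> closed [set x | u x = v x].
Proof.
move=> hY cu cv; rewrite -openC openE => x /= nx.
have /eqP nuv : u x <> v x by [].
move: hY; rewrite open_hausdorff => /(_ _ _ nuv) [[U V] /= [xU xV] [oU oV /eqP UV0]].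
have : open_nbhs x (u @^-1` U `&` v @^-1` V).
  split; last by split; apply/set_mem.
  apply: openI; [exact: (proj1 (continuousP u) cu)|exact: (proj1 (continuousP v) cv)].
move=> /open_nbhs_nbhs; apply: filterS => y [Uy Vy] /= uv.
have : (U `&` V) (u y) by split => //; rewrite uv.
by rewrite UV0.
Qed.

Section SetType.
Context {T : topologicalType} (S : set T).
Lemma val_cont : continuous (set_val : set_type S -> T).
Proof. exact: initial_continuous. Qed.
Lemma cont_into (Z : topologicalType) (h : Z -> set_type S) :
  continuous (set_val \o h) -> continuous h.
Proof. exact: continuous_comp_initial. Qed.
Lemma compact_set_type : compact S -> compact [set: set_type S].
Proof.
move=> cS F PF _.
have FS : (set_val @ F) S.
  rewrite /fmap /=; apply: filterS (filterT) => x _; exact: set_valP.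
have [q [Sq clq]] := cS _ _ FS.
exists (SigSub (mem_set Sq)); split => //.
move=> A B FA; rewrite nbhsE => -[B0 [oB0 B0q] B0B].
move: oB0 => [U oU eU].
subst B0.
have Uq : U q by exact: B0q.
have FA' : (set_val @ F) (set_val @` A).
  rewrite /fmap /=; apply: filterS FA => a Aa; by exists a.
have [t [[a Aa <-] Ua]] := clq _ _ FA' (open_nbhs_nbhs (conj oU Uq)).
by exists a; split => //; apply: B0B.
Qed.
End SetType.

Lemma finite_inj (T U : Type) (A : set T) (f : T -> U) :
  {in A &, injective f} -> finite_set (f @` A) -> finite_set A.
Proof. by move=> fi; rewrite (eq_finite_set (inj_card_eq fi)). Qed.

Section PBGroup.
Variables (A B C : CGroup) (f : A -> C) (g : B -> C).
Hypotheses (hf : is_hom f) (hg : is_hom g) (cf : continuous f) (cg : continuous g).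

Definition PB := [set p : A * B | f p.1 = g p.2].
Definition PBT := set_type PB.

Lemma pbP (x : PBT) : f (val x).1 = g (val x).2.
Proof. exact: (set_valP x). Qed.

Lemma pb_mulP (x y : PBT) : PB (cg_mul (val x).1 (val y).1, cg_mul (val x).2 (val y).2).
Proof. by rewrite /PB /= hf hg !pbP. Qed.
Lemma pb_oneP : PB (cg_one A, cg_one B).
Proof. by rewrite /PB /= (hom1 hf) (hom1 hg). Qed.
Lemma pb_invP (x : PBT) : PB (cg_inv (val x).1, cg_inv (val x).2).
Proof. by rewrite /PB /= (homV hf) (homV hg) pbP. Qed.

Definition pb_mul (x y : PBT) : PBT := SigSub (mem_set (pb_mulP x y)).
Definition pb_one : PBT := SigSub (mem_set pb_oneP).
Definition pb_inv (x : PBT) : PBT := SigSub (mem_set (pb_invP x)).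

Lemma pb_eq (x y : PBT) : (val x).1 = (val y).1 -> (val x).2 = (val y).2 -> x = y.
Proof.
move=> e1 e2; apply: val_inj; move: e1 e2; case: (val x) => ? ?; case: (val y) => ? ? /= -> -> //.
Qed.

Lemma pb_mulA x y z : pb_mul x (pb_mul y z) = pb_mul (pb_mul x y) z.
Proof. by apply: pb_eq => /=; rewrite cg_mulA. Qed.
Lemma pb_mul1g x : pb_mul pb_one x = x.
Proof. by apply: pb_eq => /=; rewrite cg_mul1g. Qed.
Lemma pb_mulg1 x : pb_mul x pb_one = x.
Proof. by apply: pb_eq => /=; rewrite cg_mulg1. Qed.
Lemma pb_mulVg x : pb_mul (pb_inv x) x = pb_one.
Proof. by apply: pb_eq => /=; rewrite cg_mulVg. Qed.
Lemma pb_mulgV x : pb_mul x (pb_inv x) = pb_one.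
Proof. by apply: pb_eq => /=; rewrite cg_mulgV. Qed.

Lemma cv1 : continuous (fun x : PBT => (val x).1).
Proof. have h := cont_comp (@val_cont _ PB) (@cont_fst A B). exact: h. Qed.
Lemma cv2 : continuous (fun x : PBT => (val x).2).
Proof. have h := cont_comp (@val_cont _ PB) (@cont_snd A B). exact: h. Qed.

Lemma pb_mul_cont : continuous (fun p : PBT * PBT => pb_mul p.1 p.2).
Proof.
apply: cont_into; apply: cont_pair => /=.
  apply: cont_mul2.
    exact: (@cont_comp _ _ _ fst _ cont_fst cv1).
  exact: (@cont_comp _ _ _ snd _ cont_snd cv1).
apply: cont_mul2.
  exact: (@cont_comp _ _ _ fst _ cont_fst cv2).
exact: (@cont_comp _ _ _ snd _ cont_snd cv2).
Qed.

Lemma pb_inv_cont : continuous pb_inv.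
Proof.
apply: cont_into; apply: cont_pair => /=.
  exact: (@cont_comp _ _ _ _ _ cv1 (@cg_inv_cont A)).
exact: (@cont_comp _ _ _ _ _ cv2 (@cg_inv_cont B)).
Qed.

Lemma PB_closed : closed PB.
Proof.
apply: (@closed_eqset _ _ (fun p : A * B => f p.1) (fun p => g p.2)).
- exact: cg_hausdorff.
- exact: (@cont_comp _ _ _ fst f cont_fst cf).
- exact: (@cont_comp _ _ _ snd g cont_snd cg).
Qed.

Lemma pb_compact : compact [set: PBT].
Proof.
apply: compact_set_type; apply: (@subclosed_compact _ PB setT PB_closed) => //.
rewrite -setXTT; apply: compact_setX; exact: cg_compact.
Qed.

Lemma pb_hausdorff : hausdorff_space PBT.
Proof.
rewrite open_hausdorff => x y nxy.
have [e1|n1] := pselect ((val x).1 = (val y).1).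
  have n2 : (val x).2 != (val y).2.
    by apply/eqP => e2; move/eqP: nxy; apply; apply: pb_eq.
  have := @cg_hausdorff B; rewrite open_hausdorff => /(_ _ _ n2) [[U V] /= [xU yV] [oU oV /eqP UV]].
  exists ((fun z : PBT => (val z).2) @^-1` U, (fun z : PBT => (val z).2) @^-1` V) => /=.
    by rewrite !inE; split; apply/set_mem.
  split; [exact: (proj1 (continuousP _) cv2)|exact: (proj1 (continuousP _) cv2)|].
  by apply/eqP; rewrite -preimage_setI UV preimage_set0.
have n1' : (val x).1 != (val y).1 by apply/eqP.
have := @cg_hausdorff A; rewrite open_hausdorff => /(_ _ _ n1') [[U V] /= [xU yV] [oU oV /eqP UV]].
exists ((fun z : PBT => (val z).1) @^-1` U, (fun z : PBT => (val z).1) @^-1` V) => /=.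
  by rewrite !inE; split; apply/set_mem.
split; [exact: (proj1 (continuousP _) cv1)|exact: (proj1 (continuousP _) cv1)|].
by apply/eqP; rewrite -preimage_setI UV preimage_set0.
Qed.

Definition PBG : CGroup := @Build_CGroup PBT pb_mul pb_one pb_inv pb_mulA pb_mul1g
  pb_mulg1 pb_mulVg pb_mulgV pb_mul_cont pb_inv_cont pb_compact pb_hausdorff.

End PBGroup.

Section PBProj.
Variables (A B C : CGroup) (f : A -> C) (g : B -> C).
Hypotheses (hf : fk_quot f) (hg : fk_quot g).

Let hf' := proj1 hf. Let hg' := proj1 hg.
Let cf := proj1 (proj2 hf). Let cg := proj1 (proj2 hg).
Local Notation G := (PBG hf' hg' cf cg).

Definition pb1 (x : G) : A := (val x).1.
Definition pb2 (x : G) : B := (val x).2.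

Lemma pb12 x : f (pb1 x) = g (pb2 x).
Proof. exact: pbP. Qed.

Lemma fk_pb1 : fk_quot pb1.
Proof.
split; first by [].
split; first exact: cv1.
split.
  move=> a; have [b gb] := proj1 (proj2 (proj2 hg)) (f a).
  have h : PB f g (a, b) by rewrite /PB /= gb.
  by exists (SigSub (mem_set h)).
apply: (@finite_inj _ _ _ pb2).
  move=> x y /set_mem Kx /set_mem Ky e; apply: pb_eq => //.
  by move: Kx Ky; rewrite /pb1 /= => -> ->.
apply: (sub_finite_set _ (proj2 (proj2 (proj2 hg)))).
move=> _ [x Kx <-] /=; rewrite -pb12; move: Kx; rewrite /= => ->.
exact: (hom1 hf').
Qed.

Lemma fk_pb2 : fk_quot pb2.
Proof.
split; first by [].
split; first exact: cv2.
split.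
  move=> b; have [a fa] := proj1 (proj2 (proj2 hf)) (g b).
  have h : PB f g (a, b) by rewrite /PB /= fa.
  by exists (SigSub (mem_set h)).
apply: (@finite_inj _ _ _ pb1).
  move=> x y /set_mem Kx /set_mem Ky e; apply: pb_eq => //.
  by move: Kx Ky; rewrite /pb2 /= => -> ->.
apply: (sub_finite_set _ (proj2 (proj2 (proj2 hf)))).
move=> _ [x Kx <-] /=; rewrite pb12; move: Kx; rewrite /= => ->.
exact: (hom1 hg').
Qed.

Section Aut.
Variables (aA bA : A -> A) (aB bB : B -> B) (aC bC : C -> C).
Hypotheses (haA : is_hom aA) (haB : is_hom aB) (caA : continuous aA) (caB : continuous aB)
  (cbA : continuous bA) (cbB : continuous bB)
  (kA : cancel aA bA) (kA' : cancel bA aA) (kB : cancel aB bB) (kB' : cancel bB aB)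
  (kC : cancel aC bC) (kC' : cancel bC aC)
  (ef : forall x, f (aA x) = aC (f x)) (eg : forall x, g (aB x) = aC (g x)).

Lemma ef' x : f (bA x) = bC (f x).
Proof. by rewrite -{2}(kA' x) ef kC. Qed.
Lemma eg' x : g (bB x) = bC (g x).
Proof. by rewrite -{2}(kB' x) eg kC. Qed.

Lemma pb_autP (x : G) : PB f g (aA (pb1 x), aB (pb2 x)).
Proof. by rewrite /PB /= ef eg pb12. Qed.
Lemma pb_autP' (x : G) : PB f g (bA (pb1 x), bB (pb2 x)).
Proof. by rewrite /PB /= ef' eg' pb12. Qed.
Definition pb_aut (x : G) : G := SigSub (mem_set (pb_autP x)).
Definition pb_aut' (x : G) : G := SigSub (mem_set (pb_autP' x)).

Lemma pb_aut_auto : is_auto pb_aut.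
Proof.
split; first by move=> x y; apply: pb_eq => /=; rewrite ?haA ?haB.
split.
  apply: cont_into; apply: cont_pair => /=.
    have h := cont_comp (@cv1 A B C f g) caA; exact: h.
  have h := cont_comp (@cv2 A B C f g) caB; exact: h.
exists pb_aut'; split; [|split].
- by move=> x; apply: pb_eq => /=; rewrite ?kA ?kB.
- by move=> x; apply: pb_eq => /=; rewrite ?kA' ?kB'.
apply: cont_into; apply: cont_pair => /=.
  have h := cont_comp (@cv1 A B C f g) cbA; exact: h.
have h := cont_comp (@cv2 A B C f g) cbB; exact: h.
Qed.
End Aut.
End PBProj.

Lemma pullback (P1 P2 Q : CGPair) (f : P1 -> Q) (g : P2 -> Q) :
  fk_quot f -> fk_quot g ->
  (forall x, f (cgp_aut P1 x) = cgp_aut Q (f x)) ->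
  (forall x, g (cgp_aut P2 x) = cgp_aut Q (g x)) ->
  exists (P : CGPair) (p1 : P -> P1) (p2 : P -> P2),
    fk_quot p1 /\ fk_quot p2 /\
    (forall x, p1 (cgp_aut P x) = cgp_aut P1 (p1 x)) /\
    (forall x, p2 (cgp_aut P x) = cgp_aut P2 (p2 x)) /\
    (forall x, f (p1 x) = g (p2 x)).
Proof.
move=> hf hg ef eg.
have [ha1 [ca1 [b1 [k1 [k1' cb1]]]]] := cgp_autP P1.
have [ha2 [ca2 [b2 [k2 [k2' cb2]]]]] := cgp_autP P2.
have [haQ [caQ [bQ [kQ [kQ' cbQ]]]]] := cgp_autP Q.
pose P := @Build_CGPair _ _ (pb_aut_auto hf hg ha1 ha2 ca1 ca2 cb1 cb2 k1 k1' k2 k2' kQ ef eg).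
exists P, (@pb1 _ _ _ f g hf hg), (@pb2 _ _ _ f g hf hg).
split; first exact: fk_pb1.
split; first exact: fk_pb2.
split; first by [].
split; first by [].
exact: pb12.
Qed.

Section Quot.
Variables (G H1 H2 : CGroup) (phi1 : G -> H1) (phi2 : G -> H2).
Hypotheses (fk1 : fk_quot phi1) (fk2 : fk_quot phi2).
Let hp1 := proj1 fk1. Let hp2 := proj1 fk2.

Definition NN : set H1 := phi1 @` [set k | phi2 k = cg_one H2].

Lemma NN1 : NN (cg_one H1).
Proof. by exists (cg_one G); [exact: hom1 hp2|exact: hom1 hp1]. Qed.
Lemma NNM x y : NN x -> NN y -> NN (cg_mul x y).
Proof.
move=> [k kK <-] [l lK <-]; exists (cg_mul k l); last exact: hp1.
by rewrite /= hp2 kK lK cg_mulg1.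
Qed.
Lemma NNV x : NN x -> NN (cg_inv x).
Proof.
move=> [k kK <-]; exists (cg_inv k); last exact: (homV hp1 k).
by rewrite /= (homV hp2) kK cinvg1.
Qed.
Lemma NNJ y x : NN x -> NN (cg_mul (cg_mul y x) (cg_inv y)).
Proof.
move=> [k kK <-]; have [g <-] := proj1 (proj2 (proj2 fk1)) y.
exists (cg_mul (cg_mul g k) (cg_inv g)).
  by rewrite /= !hp2 kK cg_mulg1 (homV hp2) cg_mulgV.
by rewrite !hp1 (homV hp1).
Qed.
Lemma NN_fin : finite_set NN.
Proof. exact/finite_image/(proj2 (proj2 (proj2 fk2))). Qed.

Definition cos (x : H1) : set H1 := [set y | NN (cg_mul (cg_inv x) y)].
Definition LS : set (set H1) := [set A | exists x, A = cos x].
Definition LT := set_type LS.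
HB.instance Definition _ := Choice.on LT.

Lemma cos_eq x y : cos x = cos y <-> NN (cg_mul (cg_inv x) y).
Proof.
split.
  move=> e; have : cos y y by rewrite /cos /= cg_mulVg; exact: NN1.
  by rewrite -e.
move=> n; apply/seteqP; split => z /=.
  move=> nz; have := NNM (NNV n) nz.
  by rewrite cinvMg cinvgK -cg_mulA cmulVKg.
move=> nz; have := NNM n nz; by rewrite -cg_mulA cmulVKg.
Qed.

Definition psi (x : H1) : LT := SigSub (mem_set (ex_intro (fun z => cos x = cos z) x erefl)).

Lemma psi_eq x y : psi x = psi y <-> NN (cg_mul (cg_inv x) y).
Proof.
rewrite -cos_eq; split; first by move=> e; have := congr1 val e.
by move=> e; apply: val_inj => /=.
Qed.

Lemma psi_surj (A : LT) : exists x, psi x = A.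
Proof.
have := set_valP A; rewrite /LS /= => -[x e]; exists x; apply: val_inj => /=.
by rewrite e.
Qed.

Definition rep (A : LT) : H1 := projT1 (cid (psi_surj A)).
Lemma repK A : psi (rep A) = A.
Proof. exact: (projT2 (cid (psi_surj A))). Qed.

Definition lopen (W : set LT) := open (psi @^-1` W).
Lemma lopT : lopen setT.
Proof. exact: openT. Qed.
Lemma lopI : setI_closed lopen.
Proof. by move=> A B oA oB; rewrite /lopen preimage_setI; exact: openI. Qed.
Lemma lop_bigU (I : Type) (f : I -> set LT) : (forall i, lopen (f i)) ->
  lopen (\bigcup_i f i).
Proof. by move=> h; rewrite /lopen preimage_bigcup; apply: bigcup_open => i _; exact: h. Qed.
HB.instance Definition _ := isOpenTopological.Build LT lopT lopI lop_bigU.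

Lemma psi_cont : continuous psi.
Proof. by apply/continuousP. Qed.


Lemma NNcongM x x' y y' : NN (cg_mul (cg_inv x) x') -> NN (cg_mul (cg_inv y) y') ->
  NN (cg_mul (cg_inv (cg_mul x y)) (cg_mul x' y')).
Proof.
move=> h1 h2; have := NNM (NNJ (cg_inv y) h1) h2.
by rewrite cinvgK -(cg_mulA _ y) cmulVKg cinvMg !cg_mulA.
Qed.

Lemma NNcongV x x' : NN (cg_mul (cg_inv x) x') -> NN (cg_mul (cg_inv (cg_inv x)) (cg_inv x')).
Proof.
move=> h; have := NNJ x (NNV h).
by rewrite cinvgK cinvMg cinvgK !cg_mulA cmulgK.
Qed.

Lemma rep_psi x : NN (cg_mul (cg_inv x) (rep (psi x))).
Proof.
have /psi_eq h := repK (psi x); have := NNV h.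
by rewrite cinvMg cinvgK.
Qed.

Lemma psi_ind (P : LT -> Prop) : (forall x, P (psi x)) -> forall A, P A.
Proof. by move=> h A; rewrite -(repK A). Qed.

Definition lmul (A B : LT) : LT := psi (cg_mul (rep A) (rep B)).
Definition lone : LT := psi (cg_one H1).
Definition linv (A : LT) : LT := psi (cg_inv (rep A)).

Lemma psiM x y : psi (cg_mul x y) = lmul (psi x) (psi y).
Proof. by apply/psi_eq; apply: NNcongM; exact: rep_psi. Qed.
Lemma psiV x : psi (cg_inv x) = linv (psi x).
Proof. by apply/psi_eq; apply: NNcongV; exact: rep_psi. Qed.

Lemma lmulA A B C : lmul A (lmul B C) = lmul (lmul A B) C.
Proof.
elim/psi_ind: A => x; elim/psi_ind: B => y; elim/psi_ind: C => z.
by rewrite -!psiM cg_mulA.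
Qed.
Lemma lmul1g A : lmul lone A = A.
Proof. by elim/psi_ind: A => x; rewrite /lone -psiM cg_mul1g. Qed.
Lemma lmulg1 A : lmul A lone = A.
Proof. by elim/psi_ind: A => x; rewrite /lone -psiM cg_mulg1. Qed.
Lemma lmulVg A : lmul (linv A) A = lone.
Proof. by elim/psi_ind: A => x; rewrite -psiV -psiM cg_mulVg. Qed.
Lemma lmulgV A : lmul A (linv A) = lone.
Proof. by elim/psi_ind: A => x; rewrite -psiV -psiM cg_mulgV. Qed.

Lemma openLE (W : set LT) : open W = open (psi @^-1` W).
Proof. by []. Qed.

Lemma cont_fromL (Y : topologicalType) (k : LT -> Y) : continuous (k \o psi) -> continuous k.
Proof.
move=> /continuousP h; apply/continuousP => W oW; rewrite openLE; exact: h.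
Qed.

Lemma rmul_cont (n : H1) : continuous (fun y : H1 => cg_mul y n).
Proof. apply: cont_mul2; [move=> x; exact: cvg_id|exact: cst_continuous]. Qed.

Lemma psi_open (U : set H1) : open U -> open (psi @` U).
Proof.
move=> oU; rewrite openLE.
have -> : psi @^-1` (psi @` U) = \bigcup_(n in NN) ((fun y => cg_mul y (cg_inv n)) @^-1` U).
  apply/seteqP; split => y /=.
    move=> [u Uu /psi_eq e]; exists (cg_mul (cg_inv u) y) => //=.
    by rewrite cinvMg cinvgK cmulVKg.
  move=> [n Nn /= Un]; exists (cg_mul y (cg_inv n)) => //; apply/psi_eq.
  by rewrite cinvMg cinvgK -cg_mulA cg_mulVg cg_mulg1.
apply: bigcup_open => n _; have := @rmul_cont (cg_inv n); move/continuousP; apply; exact: oU.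
Qed.

Lemma closed_preim (X Y : topologicalType) (h : X -> Y) (A : set Y) :
  continuous h -> closed A -> closed (h @^-1` A).
Proof.
move=> ch cA; rewrite -openC preimage_setC; apply: (proj1 (continuousP _) ch).
by rewrite openC.
Qed.

Lemma NN_closed : closed NN.
Proof.
have := hausdorff_accessible (@cg_hausdorff H1).
move/accessible_finite_set_closed; apply; exact: NN_fin.
Qed.

Lemma L_hausdorff : hausdorff_space LT.
Proof.
rewrite open_hausdorff => A B; elim/psi_ind: A => x; elim/psi_ind: B => y nxy.
pose R := (fun p : H1 * H1 => cg_mul (cg_inv p.1) p.2) @^-1` NN.
have cR : closed R.
  apply: closed_preim NN_closed; apply: cont_mul2.
    exact: (cont_comp cont_fst (@cg_inv_cont H1)).
  exact: cont_snd.
have nR : (~` R) (x, y) by move=> /= /psi_eq e; move/eqP: nxy.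
have : nbhs (x, y) (~` R).
  by apply: open_nbhs_nbhs; split => //; rewrite openC.
move=> [[P Q] /= [nP nQ] sPQ].
move: nP nQ; rewrite !nbhsE => -[U [oU Ux] UP] [V [oV Vy] VQ].
exists (psi @` U, psi @` V) => /=.
  by rewrite !inE; split; [exists x|exists y].
split; [exact: psi_open|exact: psi_open|].
apply/eqP; apply/seteqP; split => // z [[u Uu <-] [v Vv /esym/psi_eq e]].
by have := @sPQ (u, v) (conj (UP u Uu) (VQ v Vv)); move=> /(_ e).
Qed.

Lemma L_compact : compact [set: LT].
Proof.
have := continuous_compact (continuous_subspaceT psi_cont) (@cg_compact H1).
congr compact; apply/seteqP; split => // A _; have [x <-] := psi_surj A; by exists x.
Qed.

Lemma linv_cont : continuous linv.
Proof.
apply: cont_fromL.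
have -> : linv \o psi = psi \o (@cg_inv H1) by apply: funext => x /=; rewrite psiV.
exact: cont_comp (@cg_inv_cont H1) psi_cont.
Qed.

Lemma lmul_cont : continuous (fun p : LT * LT => lmul p.1 p.2).
Proof.
apply/continuousP => W oW; rewrite openE => -[A B]; move: A B.
elim/psi_ind => x; elim/psi_ind => y /= hW.
have : nbhs (cg_mul x y) (psi @^-1` W).
  by apply: open_nbhs_nbhs; split; [exact: oW|rewrite /= psiM].
move=> /(@cg_mul_cont H1 (x, y)) [[P Q] /= [nP nQ] sPQ].
move: nP nQ; rewrite !nbhsE => -[U [oU Ux] UP] [V [oV Vy] VQ].
exists (psi @` U, psi @` V) => /=.
  split; apply: open_nbhs_nbhs; (split; [exact: psi_open|]); by [exists x|exists y].
move=> [_ _] /= [[u Uu <-] [v Vv <-]] /=; rewrite -psiM.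
exact: (@sPQ (u, v) (conj (UP u Uu) (VQ v Vv))).
Qed.

Definition LG : CGroup := @Build_CGroup LT lmul lone linv lmulA lmul1g lmulg1
  lmulVg lmulgV lmul_cont linv_cont L_compact L_hausdorff.

Lemma fk_psi : fk_quot (psi : H1 -> LG).
Proof.
split; first exact: psiM.
split; first exact: psi_cont.
split; first exact: psi_surj.
apply: (sub_finite_set _ NN_fin) => x /= /esym /psi_eq.
by rewrite cinvg1 cg_mul1g.
Qed.

Let s2 := proj1_sig (surj_section (proj1 (proj2 (proj2 fk2)))).
Let s2K y : phi2 (s2 y) = y := proj2_sig (surj_section (proj1 (proj2 (proj2 fk2)))) y.

Definition psi2 (y : H2) : LG := psi (phi1 (s2 y)).

Lemma psi2E g : psi2 (phi2 g) = psi (phi1 g).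
Proof.
apply/psi_eq; exists (cg_mul (cg_inv (s2 (phi2 g))) g).
  by rewrite /= hp2 (homV hp2) s2K cg_mulVg.
by rewrite hp1 (homV hp1).
Qed.

Lemma phi2_ind (P : H2 -> Prop) : (forall g, P (phi2 g)) -> forall y, P y.
Proof. by move=> h y; rewrite -(s2K y). Qed.

Lemma psi2_cont : continuous psi2.
Proof.
apply/continuousP => W oW.
set U := psi2 @^-1` W.
have oG : open (phi2 @^-1` U).
  have -> : phi2 @^-1` U = phi1 @^-1` (psi @^-1` W).
    by apply/seteqP; split => g; rewrite /U /= psi2E.
  exact: (proj1 (continuousP _) (proj1 (proj2 fk1)) _ oW).
rewrite -[U]setCK; apply: closed_openC.
have cp2 := proj1 (proj2 fk2).
have -> : ~` U = phi2 @` (phi2 @^-1` (~` U)).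
  rewrite image_preimage //; apply/seteqP; split => // y _.
  by have [g <-] := proj1 (proj2 (proj2 fk2)) y; exists g.
apply: compact_closed; first exact: cg_hausdorff.
apply: continuous_compact; first exact: continuous_subspaceT.
apply: (@subclosed_compact _ _ setT) => //; last exact: cg_compact.
by rewrite -preimage_setC; apply: open_closedC.
Qed.

Lemma fk_psi2 : fk_quot psi2.
Proof.
split.
  move=> y y'; elim/phi2_ind: y => g; elim/phi2_ind: y' => g'.
  by rewrite -hp2 !psi2E hp1 psiM.
split; first exact: psi2_cont.
split.
  by move=> A; elim/psi_ind: A => x; have [g <-] := proj1 (proj2 (proj2 fk1)) x; exists (phi2 g); rewrite psi2E.
apply: (sub_finite_set _ (finite_image phi2 (proj2 (proj2 (proj2 fk1))))).
move=> y; elim/phi2_ind: y => g /=; rewrite psi2E => /esym /psi_eq.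
rewrite cinvg1 cg_mul1g => -[k /= kK ek].
exists (cg_mul g (cg_inv k)) => /=.
  by rewrite hp1 (homV hp1) ek cg_mulgV.
by rewrite hp2 (homV hp2) kK cinvg1 cg_mulg1.
Qed.

Lemma hom_inv_hom (K : CGroup) (a b : K -> K) : is_hom a -> cancel a b -> cancel b a -> is_hom b.
Proof.
move=> ha k k' x y; rewrite -{1}(k' x) -{1}(k' y) -ha; exact: k.
Qed.

Section LAut.
Variables (aG bG : G -> G) (a1 b1 : H1 -> H1) (a2 b2 : H2 -> H2).
Hypotheses (haG : is_hom aG) (ha1 : is_hom a1) (ha2 : is_hom a2) (ca1 : continuous a1) (cb1 : continuous b1)
  (kG : cancel aG bG) (kG' : cancel bG aG) (k1 : cancel a1 b1) (k1' : cancel b1 a1)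
  (k2 : cancel a2 b2)
  (e1 : forall g, phi1 (aG g) = a1 (phi1 g)) (e2 : forall g, phi2 (aG g) = a2 (phi2 g)).

Let hb1 := hom_inv_hom ha1 k1 k1'.

Lemma e1' g : phi1 (bG g) = b1 (phi1 g).
Proof. by rewrite -{2}(kG' g) e1 k1. Qed.

Lemma NN_a1 n : NN n -> NN (a1 n).
Proof.
move=> [k /= kK <-]; exists (aG k); last exact: e1.
by rewrite /= e2 kK (hom1 ha2).
Qed.

Lemma NN_b1 n : NN n -> NN (b1 n).
Proof.
move=> [k /= kK <-]; exists (bG k); last exact: e1'.
apply: (can_inj k2); rewrite -e2 kG' kK.
by rewrite (hom1 ha2).
Qed.

Definition aL (A : LT) : LT := psi (a1 (rep A)).
Definition bL (A : LT) : LT := psi (b1 (rep A)).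

Lemma aL_psi x : aL (psi x) = psi (a1 x).
Proof.
apply/esym/psi_eq; have := NN_a1 (rep_psi x).
by rewrite ha1 (homV ha1).
Qed.
Lemma bL_psi x : bL (psi x) = psi (b1 x).
Proof.
apply/esym/psi_eq; have := NN_b1 (rep_psi x).
by rewrite hb1 (homV hb1).
Qed.

Lemma aL_auto : is_auto (aL : LG -> LG).
Proof.
split.
  move=> A B; elim/psi_ind: A => x; elim/psi_ind: B => y.
  by rewrite /= -psiM !aL_psi ha1 psiM.
split.
  apply: cont_fromL.
  have -> : aL \o psi = psi \o a1 by apply: funext => x /=; rewrite aL_psi.
  exact: cont_comp ca1 psi_cont.
exists bL; split; [|split].
- by elim/psi_ind => x; rewrite aL_psi bL_psi k1.
- by elim/psi_ind => x; rewrite bL_psi aL_psi k1'.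
apply: cont_fromL.
have -> : bL \o psi = psi \o b1 by apply: funext => x /=; rewrite bL_psi.
exact: cont_comp cb1 psi_cont.
Qed.

Lemma aL_psi2 y : aL (psi2 y) = psi2 (a2 y).
Proof. by elim/phi2_ind: y => g; rewrite psi2E aL_psi -e1 -e2 psi2E. Qed.
End LAut.

End Quot.


Lemma common_quot (H1 H2 : CGPair) : cocommensurable H1 H2 ->
  exists (L : CGPair) (psi1 : H1 -> L) (psi2 : H2 -> L),
       fk_quot psi1 /\ fk_quot psi2 /\
       (forall x : H1, cgp_aut L (psi1 x) = psi1 (cgp_aut H1 x)) /\
       (forall x : H2, cgp_aut L (psi2 x) = psi2 (cgp_aut H2 x)).
Proof.
move=> [P [phi1 [phi2 [f1 [f2 [e1 e2]]]]]].
have [haG [caG [bG [kG [kG' cbG]]]]] := cgp_autP P.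
have [ha1 [ca1 [b1 [k1 [k1' cb1]]]]] := cgp_autP H1.
have [ha2 [ca2 [b2 [k2 [k2' cb2]]]]] := cgp_autP H2.
pose L := @Build_CGPair _ _ (aL_auto f1 f2 ha1 ha2 ca1 cb1 kG' k1 k1' k2 e1 e2).
exists L, (psi phi1 phi2 : H1 -> L), (psi2 f1 f2 : H2 -> L).
split; first exact: fk_psi.
split; first exact: fk_psi2.
split; first by move=> x; rewrite /= (aL_psi f1 f2 ha1 ha2 e1 e2).
by move=> x; rewrite /= (aL_psi2 f1 f2 ha1 ha2 e1 e2).
Qed.

Theorem proposition6p15 :
  ((forall P : CGPair, cocommensurable P P) /\
   (forall P Q : CGPair, cocommensurable P Q -> cocommensurable Q P) /\
   (forall P Q R : CGPair,
      cocommensurable P Q -> cocommensurable Q R -> cocommensurable P R)) /\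
  (forall H1 H2 : CGPair,
     cocommensurable H1 H2 <->
     exists (L : CGPair) (psi1 : H1 -> L) (psi2 : H2 -> L),
       fk_quot psi1 /\ fk_quot psi2 /\
       (forall x : H1, cgp_aut L (psi1 x) = psi1 (cgp_aut H1 x)) /\
       (forall x : H2, cgp_aut L (psi2 x) = psi2 (cgp_aut H2 x))).
Proof.
split; [split; [|split]|].
- move=> P; exists P, id, id; do 2 (split; first exact: fk_id); by split.
- move=> P Q [G [f1 [f2 [h1 [h2 [e1 e2]]]]]]; by exists G, f2, f1.
- move=> P Q R [G [f1 [f2 [h1 [h2 [e1 e2]]]]]] [G' [g1 [g2 [h1' [h2' [e1' e2']]]]]].
  have [P'' [p1 [p2 [hp1 [hp2 [ep1 [ep2 _]]]]]]] := pullback h2 h1' e2 e1'.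
  exists P'', (f1 \o p1), (g2 \o p2).
  split; first exact: fk_comp.
  split; first exact: fk_comp.
  by split => x /=; rewrite ?ep1 ?ep2 ?e1 ?e2'.
- move=> H1 H2; split; first exact: common_quot.
  move=> [L [psi1 [psi2 [h1 [h2 [e1 e2]]]]]].
  have [P [p1 [p2 [hp1 [hp2 [ep1 [ep2 _]]]]]]] :=
    pullback h1 h2 (fun x => esym (e1 x)) (fun x => esym (e2 x)).
  by exists P, p1, p2.
Qed.
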